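(* $$\sum_{n\ge0}|\mathfrak S_n(1243,2143,231)|x^n=1+x\frac{(x-1)^2}{(2x-1)^2},$$ and consequently $|\mathfrak S_n(1243,2143,231)|=(n+2)2^{n-3}$ for all $n\ge2$.
   Context: $\mathfrak S_n(R)$ is the set of permutations of $\{1,\dots,n\}$ avoiding every pattern in $R$, where $\pi$ avoids $\sigma$ if no subsequence of $\pi$ has the same relative order as $\sigma$. *)

(* Defs.v *)
From HB Require Import structures.
From mathcomp Require Import all_boot all_order all_algebra all_fingroup.
From mathcomp Require Import all_classical all_reals all_analysis.
Set Implicit Arguments. Unset Strict Implicit. Unset Printing Implicit Defensive.

(* A permutation [pi] of {0,...,n-1} (i.e. of {1,...,n} shifted by one, which
   does not change relative orders) contains the pattern [sigma] (given as the
   sequence of its values, e.g. [:: 2; 3; 1] for 231) if there are positions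
   f 0 < f 1 < ... < f (k-1) such that pi (f a) < pi (f b) iff
   sigma_a < sigma_b. *)
Definition contains_pattern (n : nat) (pi : 'S_n) (sigma : seq nat) : bool :=
  [exists f : {ffun 'I_(size sigma) -> 'I_n},
    [forall a : 'I_(size sigma), forall b : 'I_(size sigma),
      ((a < b) ==> (f a < f b)) &&
      ((pi (f a) < pi (f b)) == (nth 0 sigma a < nth 0 sigma b))]].

Definition avoids (n : nat) (pi : 'S_n) (R : seq (seq nat)) : bool :=
  all (fun sigma => ~~ contains_pattern pi sigma) R.

Definition num_avoiders (R : seq (seq nat)) (n : nat) : nat :=
  #|[set pi : 'S_n | avoids pi R]|.

(* Main.v *)
Require Import Defs.
From HB Require Import structures.
From mathcomp Require Import all_boot all_order all_algebra all_fingroup.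
From mathcomp Require Import all_classical all_reals all_analysis.
From mathcomp Require Import zify ring lra.
Set Implicit Arguments. Unset Strict Implicit. Unset Printing Implicit Defensive.

Fixpoint subs (s : seq nat) : seq (seq nat) :=
  if s is x :: s' then [seq x :: t | t <- subs s'] ++ subs s' else [:: [::]].

Lemma mem_subs t s : (t \in subs s) = subseq t s.
Proof.
elim: s t => [|x s IH] [|y t] //=.
- by rewrite mem_cat IH sub0seq orbT.
- rewrite mem_cat IH; case: eqP => [<-|ne].
  + have -> : (y :: t \in [seq y :: t0 | t0 <- subs s]) = subseq t s.
      by rewrite mem_map ?IH //; move=> a b [].
    apply/orP/idP => [[//|H]|->]; last by left.
    exact: subseq_trans (subseq_cons t y) H.
  + have -> : (y :: t \in [seq x :: t0 | t0 <- subs s]) = false.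
      by apply/mapP => -[? _ [E _]]; move: ne; rewrite E.
    by [].
Qed.

Definition iso (t p : seq nat) : bool :=
  (size t == size p) &&
  all (fun i => all (fun j => (nth 0 t i < nth 0 t j) == (nth 0 p i < nth 0 p j))
     (iota 0 (size p))) (iota 0 (size p)).

Definition cont (p s : seq nat) : bool := has (iso^~ p) (subs s).

Lemma contP p s : reflect (exists2 t, subseq t s & iso t p) (cont p s).
Proof.
apply: (iffP hasP) => -[t H1 H2]; exists t => //; by rewrite ?mem_subs in H1 *.
Qed.

Lemma cont_sub p s1 s2 : subseq s1 s2 -> cont p s1 -> cont p s2.
Proof. by move=> S /contP [t T1 T2]; apply/contP; exists t => //; apply: subseq_trans S. Qed.

Definition p231 := [:: 2; 3; 1].
Definition p132 := [:: 1; 3; 2].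
Definition p1243 := [:: 1; 2; 4; 3].
Definition p2143 := [:: 2; 1; 4; 3].



Lemma iso231 a b c : iso [:: a; b; c] p231 = (c < a) && (a < b).
Proof. by rewrite /iso /=; case: (ltngtP a b) => ?; case: (ltngtP a c) => ?; case: (ltngtP b c) => ? //=; lia. Qed.
Lemma iso132 a b c : iso [:: a; b; c] p132 = (a < c) && (c < b).
Proof. by rewrite /iso /=; case: (ltngtP a b) => ?; case: (ltngtP a c) => ?; case: (ltngtP b c) => ? //=; lia. Qed.
Lemma iso1243 a b c d : iso [:: a; b; c; d] p1243 = [&& a < b, b < d & d < c].
Proof.
by rewrite /iso /=; case: (ltngtP a b) => ?; case: (ltngtP a c) => ?; case: (ltngtP a d) => ?; case: (ltngtP b c) => ?; case: (ltngtP b d) => ?; case: (ltngtP c d) => ? //=; lia.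
Qed.
Lemma iso2143 a b c d : iso [:: a; b; c; d] p2143 = [&& b < a, a < d & d < c].
Proof.
by rewrite /iso /=; case: (ltngtP a b) => ?; case: (ltngtP a c) => ?; case: (ltngtP a d) => ?; case: (ltngtP b c) => ?; case: (ltngtP b d) => ?; case: (ltngtP c d) => ? //=; lia.
Qed.


Lemma iso_size (t p : seq nat) : iso t p -> size t = size p.
Proof. by case/andP => /eqP. Qed.

Lemma subseq_cons_inv (t s : seq nat) m : subseq t (m :: s) ->
  subseq t s \/ exists2 t', t = m :: t' & subseq t' s.
Proof.
case: t => [|y t] /=; first by left; rewrite sub0seq.
case: eqP => [->|_]; last by left.
by move=> H; right; exists t.
Qed.

Lemma subseq_rcons_inv (t s : seq nat) m : subseq t (rcons s m) ->
  subseq t s \/ exists2 t', t = rcons t' m & subseq t' s.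
Proof.
rewrite -subseq_rev rev_rcons => /subseq_cons_inv [H|[t' E H]].
- by left; rewrite -subseq_rev.
- right; exists (rev t'); first by rewrite -rev_cons -E revK.
  by rewrite -subseq_rev revK.
Qed.

Lemma subseq_map_inv (f : nat -> nat) t s : subseq t (map f s) ->
  exists2 t', t = map f t' & subseq t' s.
Proof.
move/subseqP => [m sz ->]; exists (mask m s); first by rewrite map_mask.
exact: mask_subseq.
Qed.

Definition pats := [:: p231; p132; p1243; p2143].

Lemma all_sub (P : pred nat) (t s : seq nat) : subseq t s -> all P s -> all P t.
Proof. by move=> H /allP A; apply/allP => x /(mem_subseq H) /A. Qed.

Lemma cont_rcons_max p m s : p \in pats -> all (fun x => x < m) s ->
  cont p (rcons s m) = cont p s.
Proof.
move=> Hp Hall; apply/idP/idP; last exact: cont_sub (subseq_rcons s m).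
case/contP => t Hs Hi; case: (subseq_rcons_inv Hs) => [H|[t' E H]].
  by apply/contP; exists t.
subst t; have := all_sub H Hall; move: Hi (iso_size Hi); rewrite size_rcons.
move: Hp; rewrite !inE => /or4P [] /eqP ->;
case: t' {H Hs} => [|a [|b [|c [|d t']]]] //=;
rewrite ?iso231 ?iso132 ?iso1243 ?iso2143 => ? ? ?; lia.
Qed.

Lemma cont_cons_max p m s : p \in pats -> all (fun x => x < m) s ->
  cont p (m :: s) = cont p s.
Proof.
move=> Hp Hall; apply/idP/idP; last exact: cont_sub (subseq_cons s m).
case/contP => t Hs Hi; case: (subseq_cons_inv Hs) => [H|[t' E H]].
  by apply/contP; exists t.
subst t; have := all_sub H Hall; move: Hi (iso_size Hi).
move: Hp; rewrite !inE => /or4P [] /eqP ->;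
case: t' {H Hs} => [|a [|b [|c [|d t']]]] //=;
rewrite ?iso231 ?iso132 ?iso1243 ?iso2143 => ? ? ?; lia.
Qed.

Lemma cont_cons_min231 v s : all (fun x => v < x) s ->
  cont p231 (v :: s) = cont p231 s.
Proof.
move=> Hall; apply/idP/idP; last exact: cont_sub (subseq_cons s v).
case/contP => t Hs Hi; case: (subseq_cons_inv Hs) => [H|[t' E H]].
  by apply/contP; exists t.
subst t; have := all_sub H Hall; move: Hi (iso_size Hi).
case: t' {H Hs} => [|a [|b [|c [|d t']]]] //=;
rewrite ?iso231 => ? ? ?; lia.
Qed.

Lemma cont_cons_min4 p v s : p \in [:: p1243; p2143] -> all (fun x => v < x) s ->
  cont p (v :: s) -> cont p s || cont p132 s.
Proof.
move=> Hp Hall; case/contP => t Hs Hi; case: (subseq_cons_inv Hs) => [H|[t' E H]].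
  by apply/orP; left; apply/contP; exists t.
subst t; have := all_sub H Hall; move: Hi (iso_size Hi).
move: Hp; rewrite !inE => /orP [] /eqP ->;
case: t' H {Hs} => [|a [|b [|c [|d t']]]] //= H;
rewrite ?iso1243 ?iso2143 => ? ? ?; apply/orP; right; apply/contP;
exists [:: a; b; c] => //; rewrite iso132; lia.
Qed.

Lemma cont4_132 p s : p \in [:: p1243; p2143] -> cont p s -> cont p132 s.
Proof.
move=> Hp; case/contP => t Hs Hi; move: Hi (iso_size Hi).
move: Hp; rewrite !inE => /orP [] /eqP ->;
case: t Hs => [|a [|b [|c [|d [|e t]]]]] //= Hs;
rewrite ?iso1243 ?iso2143 => ? ?; apply/contP;
exists [:: b; c; d]; rewrite ?iso132; try lia;
by apply: subseq_trans Hs; apply: subseq_cons.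
Qed.

Lemma iso_map (f : nat -> nat) t p : {mono f : x y / x < y} ->
  iso (map f t) p = iso t p.
Proof.
move=> mf; rewrite /iso size_map; case: eqP => //= E.
apply: eq_in_all => i; rewrite mem_iota => /andP [_ Hi].
apply: eq_in_all => j; rewrite mem_iota => /andP [_ Hj].
by rewrite !(nth_map 0) ?E // mf.
Qed.

Lemma cont_map (f : nat -> nat) p s : {mono f : x y / x < y} ->
  cont p (map f s) = cont p s.
Proof.
move=> mf; apply/contP/contP => -[t Hs Hi].
- case: (subseq_map_inv Hs) => t' E H; exists t' => //.
  by rewrite -(iso_map _ _ mf) -E.
- by exists (map f t); [apply: map_subseq | rewrite iso_map].
Qed.

Definition good (s : seq nat) := all (fun p => ~~ cont p s) [:: p1243; p2143; p231].
Definition tgood (s : seq nat) := ~~ cont p231 s && ~~ cont p132 s.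
Definition Pm n (s : seq nat) := perm_eq s (iota 0 n).

Lemma goodE s : good s = [&& ~~ cont p1243 s, ~~ cont p2143 s & ~~ cont p231 s].
Proof. by rewrite /good /= andbT. Qed.

Lemma good_sub s1 s2 : subseq s1 s2 -> good s2 -> good s1.
Proof.
move=> H; rewrite !goodE => /and3P [A B C]; apply/and3P; split.
- exact: contra (cont_sub H) A.
- exact: contra (cont_sub H) B.
- exact: contra (cont_sub H) C.
Qed.

Lemma tgood_sub s1 s2 : subseq s1 s2 -> tgood s2 -> tgood s1.
Proof.
move=> H /andP [A B]; apply/andP; split.
- exact: contra (cont_sub H) A.
- exact: contra (cont_sub H) B.
Qed.

Lemma iota_rcons n : iota 0 n.+1 = rcons (iota 0 n) n.
Proof. by rewrite -addn1 iotaD cats1. Qed.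

Lemma iota_S n : iota 0 n.+1 = 0 :: map succn (iota 0 n).
Proof.
rewrite /= -[1]/(1 + 0) iotaDl; apply: congr1; apply: eq_map => x; exact: add1n.
Qed.

Lemma Pm_uniq n s : Pm n s -> uniq s.
Proof. by move/perm_uniq => ->; apply: iota_uniq. Qed.

Lemma Pm_all n s : Pm n s -> all (fun x => x < n) s.
Proof. by move=> H; apply/allP => x; rewrite (perm_mem H) mem_iota. Qed.

Lemma Pm_size n s : Pm n s -> size s = n.
Proof. by move/perm_size; rewrite size_iota. Qed.

Lemma Pm_rcons n s : Pm n.+1 (rcons s n) = Pm n s.
Proof. by rewrite /Pm iota_rcons -!cats1 perm_cat2r. Qed.

Lemma Pm_cons n s : Pm n.+1 (n :: s) = Pm n s.
Proof. by rewrite /Pm iota_rcons -cats1 perm_sym perm_catC /= perm_cons perm_sym. Qed.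

Lemma Pm_mid n a b : Pm n.+1 (a ++ n :: b) = Pm n (a ++ b).
Proof.
rewrite /Pm iota_rcons -cats1 perm_sym perm_catC /= perm_sym.
by rewrite -cat1s perm_catCA /= perm_cons.
Qed.

Lemma Pm_shift k s : Pm k.+1 (0 :: map succn s) = Pm k s.
Proof.
rewrite /Pm iota_S perm_cons; apply/idP/idP; last exact: perm_map.
by apply: perm_map_inj => x y [].
Qed.

Lemma sub3 (x m z : nat) a b : x \in a -> z \in b -> subseq [:: x; m; z] (a ++ m :: b).
Proof.
move=> xa zb; rewrite -[[:: x; m; z]]/([:: x] ++ [:: m; z]).
by apply: cat_subseq; rewrite ?sub1seq //= eqxx sub1seq.
Qed.

Lemma uniq_neq (a b : seq nat) x z : uniq (a ++ b) -> x \in a -> z \in b -> x != z.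
Proof.
rewrite cat_uniq => /and3P [_ H _] xa zb; apply/eqP => E; subst z.
by move/hasP: H; apply; exists x.
Qed.

Lemma monoS : {mono succn : x y / x < y}.
Proof. by move=> x y; rewrite ltnS. Qed.

Lemma goodG1 n a : good a -> Pm n a -> good (rcons a n).
Proof.
move=> G /Pm_all A; move: G; rewrite !goodE !cont_rcons_max //.
Qed.

Lemma goodG2 n b : good b -> Pm n b -> good (n :: b).
Proof.
move=> G /Pm_all A; move: G; rewrite !goodE !cont_cons_max //.
Qed.

Lemma tgoodT1 n a : tgood a -> Pm n a -> tgood (rcons a n).
Proof. move=> G /Pm_all A; move: G; rewrite /tgood !cont_rcons_max //. Qed.

Lemma tgoodT2 n b : tgood b -> Pm n b -> tgood (n :: b).
Proof. move=> G /Pm_all A; move: G; rewrite /tgood !cont_cons_max //. Qed.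

Lemma goodG3 k b : tgood b -> Pm k b -> good (0 :: k.+1 :: map succn b).
Proof.
move=> /andP [T1 T2] /Pm_all A.
have A1 : all (fun x => x < k.+1) (map succn b).
  by rewrite all_map; apply: sub_all A => x /=; rewrite ltnS.
have A0 : all (fun x => 0 < x) (k.+1 :: map succn b).
  by rewrite /= all_map; apply/allP.
rewrite goodE; apply/and3P; split.
- apply/negP => /(@cont_cons_min4 p1243 0 _ isT A0) /orP [].
  + rewrite cont_cons_max // cont_map ?monoS // => /(@cont4_132 p1243 _ isT).
    by apply/negP.
  + by rewrite cont_cons_max // cont_map ?monoS //; apply/negP.
- apply/negP => /(@cont_cons_min4 p2143 0 _ isT A0) /orP [].
  + rewrite cont_cons_max // cont_map ?monoS // => /(@cont4_132 p2143 _ isT).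
    by apply/negP.
  + by rewrite cont_cons_max // cont_map ?monoS //; apply/negP.
- by rewrite cont_cons_min231 // cont_cons_max // cont_map ?monoS.
Qed.

Lemma decompT k s : Pm k.+2 s -> tgood s ->
  (exists2 a, s = rcons a k.+1 & Pm k.+1 a /\ tgood a) \/
  (exists2 b, s = k.+1 :: b & Pm k.+1 b /\ tgood b).
Proof.
move=> P G; have H : k.+1 \in s by rewrite (perm_mem P) mem_iota add0n leqnn.
move: P G; case/splitPr: H => a b P G.
have P' := P; rewrite Pm_mid in P'.
case: b => [|z b] in P G P' *.
  left; exists a; first by rewrite cats1.
  split; first by rewrite cats0 in P'.
  by apply: tgood_sub G; apply: prefix_subseq.
case: a => [|x a] in P G P' *.
  right; exists (z :: b) => //; split => //.
  by apply: tgood_sub G; apply: subseq_cons.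
exfalso; have U := Pm_uniq P'; have A := Pm_all P'.
have xz : x != z by apply: (uniq_neq U); rewrite inE eqxx.
have Ax : x < k.+1 by move/allP: A; apply; rewrite inE eqxx.
have Az : z < k.+1 by move/allP: A; apply; rewrite mem_cat !inE eqxx orbT.
have S := @sub3 x k.+1 z (x :: a) (z :: b) (mem_head _ _) (mem_head _ _).
move: G => /andP [G1 G2]; case: (ltngtP x z) => [xz'|zx|E].
- move/negP: G2; apply; apply/contP; exists [:: x; k.+1; z]; first exact: S.
  by rewrite iso132 xz' Az.
- move/negP: G1; apply; apply/contP; exists [:: x; k.+1; z]; first exact: S.
  by rewrite iso231 zx Ax.
- by rewrite E eqxx in xz.
Qed.

Lemma decompG k s : Pm k.+3 s -> good s ->
  [\/ exists2 a, s = rcons a k.+2 & Pm k.+2 a /\ good a,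
      exists2 b, s = k.+2 :: b & Pm k.+2 b /\ good b |
      exists2 b, s = 0 :: k.+2 :: map succn b & Pm k.+1 b /\ tgood b].
Proof.
move=> P G; have H : k.+2 \in s by rewrite (perm_mem P) mem_iota add0n leqnn.
move: P G; case/splitPr: H => a b P G.
have P' := P; rewrite Pm_mid in P'.
case: b => [|z b] in P G P' *.
  apply: Or31; exists a; first by rewrite cats1.
  split; first by rewrite cats0 in P'.
  by apply: good_sub G; apply: prefix_subseq.
case: a => [|x a] in P G P' *.
  apply: Or32; exists (z :: b) => //; split => //.
  by apply: good_sub G; apply: subseq_cons.
have U := Pm_uniq P'; have A := Pm_all P'.
have xz : x != z by apply: (uniq_neq U); rewrite inE eqxx.
have Ax : x < k.+2 by move/allP: A; apply; rewrite inE eqxx.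
have Az : z < k.+2 by move/allP: A; apply; rewrite mem_cat !inE eqxx orbT.
move: (G); rewrite goodE => /and3P [G1 G2 G3].
case: a => [|y a] in P G P' U A G1 G2 G3 *.
-
  apply: Or33.
  have x0 : x = 0.
    case: x => [//|x'] in xz Ax U A P P' G G1 G2 G3 *.
    have : 0 \in x'.+1 :: z :: b by rewrite (perm_mem P') mem_iota.
    rewrite in_cons /= => H0.
    exfalso; move/negP: G3; apply; apply/contP; exists [:: x'.+1; k.+2; 0].
      exact: (@sub3 x'.+1 k.+2 0 [:: x'.+1] (z :: b) (mem_head _ _) H0).
    by rewrite iso231 Ax.
  subst x.
  have bpos : all (fun v => 0 < v) (z :: b).
    apply/allP => v vb; rewrite lt0n; apply/eqP => v0; subst v.
    by move: U; rewrite /= vb.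
  have Eb : map succn (map predn (z :: b)) = z :: b.
    rewrite -map_comp; apply: map_id_in => v vb /=.
    by rewrite prednK //; move/allP: bpos; apply.
  exists (map predn (z :: b)); first by rewrite Eb.
  split; first by rewrite -Pm_shift Eb.
  apply/andP; split.
  + rewrite -(cont_map _ _ monoS) Eb; apply/negP => C.
    move/negP: G3; apply; apply: cont_sub C.
    exact: (suffix_subseq [:: 0; k.+2] (z :: b)).
  + rewrite -(cont_map _ _ monoS) Eb; apply/negP => /contP [t Ht Hi].
    move/negP: G1; apply; apply/contP.
    move: Hi (iso_size Hi); case: t Ht => [|a1 [|b1 [|c1 [|d1 t]]]] Ht Hi //= Hsz.
    exists [:: 0; a1; b1; c1].
      exact: (cat_subseq (subseq_refl [:: 0]) (subseq_trans Ht (subseq_cons _ k.+2))).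
    rewrite iso1243; move: Hi; rewrite iso132 => /andP [-> ->]; rewrite andbT.
    by rewrite andbT; move/allP: bpos; apply; apply: (mem_subseq Ht); rewrite inE eqxx.
-
  exfalso.
  have yz : y != z by apply: (uniq_neq U); rewrite !inE eqxx /= ?orbT.
  have xy : x != y by move: U; rewrite /= inE; case: eqP.
  have Ay : y < k.+2 by move/allP: A; apply; rewrite !inE eqxx /= ?orbT.
  case: (ltngtP x z) => [xz'|zx|E]; last by rewrite E eqxx in xz.
  + case: (ltngtP y z) => [yz'|zy|E]; last by rewrite E eqxx in yz.
    * case: (ltngtP x y) => [xy'|yx|E]; last by rewrite E eqxx in xy.
      - move/negP: G1; apply; apply/contP; exists [:: x; y; k.+2; z].
          rewrite -[[:: x; y; k.+2; z]]/([:: x; y] ++ [:: k.+2; z]).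
          by apply: cat_subseq; rewrite /= ?eqxx ?sub0seq ?sub1seq ?inE ?eqxx.
        by rewrite iso1243 xy' yz' Az.
      - move/negP: G2; apply; apply/contP; exists [:: x; y; k.+2; z].
          rewrite -[[:: x; y; k.+2; z]]/([:: x; y] ++ [:: k.+2; z]).
          by apply: cat_subseq; rewrite /= ?eqxx ?sub0seq ?sub1seq ?inE ?eqxx.
        by rewrite iso2143 yx xz' Az.
    * move/negP: G3; apply; apply/contP; exists [:: y; k.+2; z].
        by apply: sub3; rewrite !inE eqxx /= ?orbT.
      by rewrite iso231 zy Ay.
  + move/negP: G3; apply; apply/contP; exists [:: x; k.+2; z].
      by apply: sub3; rewrite !inE eqxx /= ?orbT.
    by rewrite iso231 zx Ax.
Qed.

Definition perms n := permutations (iota 0 n).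
Definition Gc n := count good (perms n).
Definition Tc n := count tgood (perms n).

Lemma count_Pm (Q : pred (seq nat)) n l : uniq l ->
  (forall s, (s \in l) = Q s && Pm n s) -> size l = count Q (perms n).
Proof.
move=> U H; rewrite -size_filter; apply: perm_size; apply: uniq_perm => //.
  by rewrite filter_uniq // permutations_uniq.
by move=> s; rewrite mem_filter mem_permutations H.
Qed.

Lemma index_rc n a : Pm n a -> index n (rcons a n) = n.
Proof.
move=> P; rewrite -cats1 index_cat.
have -> : (n \in a) = false by rewrite (perm_mem P) mem_iota /= ltnn.
by rewrite /= eqxx addn0 (Pm_size P).
Qed.

Lemma Tc_rec k : Tc k.+2 = (Tc k.+1).*2.
Proof.
set LT := seq.filter tgood (perms k.+1).
have szLT : size LT = Tc k.+1 by rewrite size_filter.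
have ULT : uniq LT by rewrite filter_uniq // permutations_uniq.
have memLT b : (b \in LT) = tgood b && Pm k.+1 b.
  by rewrite mem_filter mem_permutations.
rewrite {1}/Tc -(@count_Pm tgood k.+2 (map (rcons^~ k.+1) LT ++ map (cons k.+1) LT)).
- by rewrite size_cat !size_map szLT addnn.
- rewrite cat_uniq !map_inj_uniq ?ULT //=; last exact: rcons_injl.
  + rewrite andbT; apply/hasPn => s /mapP [b _ ->]; apply/mapP => -[a aL E].
    move: aL; rewrite memLT => /andP [_ Pa].
    by have := congr1 (index k.+1) E; rewrite index_rc // /= eqxx.
  + by move=> x y [].
- move=> s; rewrite mem_cat; apply/orP/andP.
  + case=> /mapP [a]; rewrite memLT => /andP [Ga Pa] ->.
    * by rewrite Pm_rcons; split => //; apply: tgoodT1 Pa.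
    * by rewrite Pm_cons; split => //; apply: tgoodT2 Pa.
  + case=> G P; case: (decompT P G) => [[a E [Pa Ga]]|[b E [Pb Gb]]]; subst s.
    * by left; apply: map_f; rewrite memLT Ga.
    * by right; apply: map_f; rewrite memLT Gb.
Qed.

Lemma Gc_rec k : Gc k.+3 = (Gc k.+2).*2 + Tc k.+1.
Proof.
set LA := seq.filter good (perms k.+2).
set LT := seq.filter tgood (perms k.+1).
have szLA : size LA = Gc k.+2 by rewrite size_filter.
have szLT : size LT = Tc k.+1 by rewrite size_filter.
have ULA : uniq LA by rewrite filter_uniq // permutations_uniq.
have ULT : uniq LT by rewrite filter_uniq // permutations_uniq.
have memLA b : (b \in LA) = good b && Pm k.+2 b.
  by rewrite mem_filter mem_permutations.
have memLT b : (b \in LT) = tgood b && Pm k.+1 b.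
  by rewrite mem_filter mem_permutations.
pose f3 := fun b => 0 :: k.+2 :: map succn b.
have f3inj : injective f3 by move=> x y [] /(inj_map succn_inj).
have idx3 b : index k.+2 (f3 b) = 1 by rewrite /f3 /= eqxx.
rewrite {1}/Gc -(@count_Pm good k.+3
   (map (rcons^~ k.+2) LA ++ map (cons k.+2) LA ++ map f3 LT)).
- by rewrite !size_cat !size_map szLA szLT addnA addnn.
- rewrite !cat_uniq !map_inj_uniq ?ULT ?ULA //=; last first.
  + exact: rcons_injl.
  + by move=> x y [].
  rewrite andbT; apply/andP; split; last first.
    apply/hasPn => s /mapP [b _ ->]; apply/mapP => -[a aL E].
    by have := congr1 (index k.+2) E; rewrite idx3 /= eqxx.
  rewrite has_cat negb_or; apply/andP; split.
  + apply/hasPn => s /mapP [b _ ->]; apply/mapP => -[a aL E].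
    move: aL; rewrite memLA => /andP [_ Pa].
    by have := congr1 (index k.+2) E; rewrite index_rc // /= eqxx.
  + apply/hasPn => s /mapP [b _ ->]; apply/mapP => -[a aL E].
    move: aL; rewrite memLA => /andP [_ Pa].
    by have := congr1 (index k.+2) E; rewrite index_rc // idx3.
- move=> s; rewrite !mem_cat; apply/idP/andP.
  + case/or3P => /mapP [a]; rewrite ?memLA ?memLT => /andP [Ga Pa] ->.
    * by rewrite Pm_rcons; split => //; apply: goodG1 Pa.
    * by rewrite Pm_cons; split => //; apply: goodG2 Pa.
    * split; first exact: goodG3.
      by have -> : f3 a = 0 :: map succn (k.+1 :: a) by [];
      rewrite Pm_shift Pm_cons.
  + case=> G P; case: (decompG P G) => [[a E [Pa Ga]]|[b E [Pb Gb]]|[b E [Pb Gb]]]; subst s.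
    * by apply/or3P; apply: Or31; apply: map_f; rewrite memLA Ga.
    * by apply/or3P; apply: Or32; apply: map_f; rewrite memLA Gb.
    * by apply/or3P; apply: Or33; apply: (map_f f3); rewrite memLT Gb.
Qed.

Lemma Gc0 : Gc 0 = 1. Proof. by vm_compute. Qed.
Lemma Gc1 : Gc 1 = 1. Proof. by vm_compute. Qed.
Lemma Gc2 : Gc 2 = 2. Proof. by vm_compute. Qed.
Lemma Tc1 : Tc 1 = 1. Proof. by vm_compute. Qed.

Lemma Tc_closed k : Tc k.+1 = 2 ^ k.
Proof. elim: k => [|k IH]; first exact: Tc1. by rewrite Tc_rec IH expnS mul2n. Qed.

Lemma Gc_closed k : (Gc k.+2).*2 = (k + 4) * 2 ^ k.
Proof.
elim: k => [|k IH]; first by rewrite Gc2.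
rewrite Gc_rec Tc_closed doubleD IH expnS; nia.
Qed.

Definition seqOf n (pi : 'S_n) : seq nat := [seq val (pi i) | i <- enum 'I_n].

Lemma sorted_enum_ord k : sorted (fun a b : 'I_k => a < b) (enum 'I_k).
Proof. by have := iota_ltn_sorted 0 k; rewrite -val_enum_ord sorted_map. Qed.

Lemma contains_cont n (pi : 'S_n) sigma :
  contains_pattern pi sigma = cont sigma (seqOf pi).
Proof.
set k := size sigma.
apply/existsP/contP.
- move=> [f /forallP H].
  have Hab (a b : 'I_k) : ((a < b) ==> (f a < f b)) &&
      ((pi (f a) < pi (f b)) == (nth 0 sigma a < nth 0 sigma b)).
    by move/forallP: (H a); apply.
  exists [seq val (pi (f a)) | a <- enum 'I_k].
  + have -> : [seq val (pi (f a)) | a <- enum 'I_k] =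
              map (fun i => val (pi i)) (map f (enum 'I_k)).
      exact: (map_comp (fun i => val (pi i)) f (enum 'I_k)).
    apply: map_subseq.
    apply/subseq_uniqP; first exact: enum_uniq.
    have ltr_tr : transitive (fun a b : 'I_n => a < b).
      by move=> x y z; apply: ltn_trans.
    apply: (irr_sorted_eq ltr_tr) => //.
    + by move=> x; rewrite /= ltnn.
    + apply: (homo_sorted (e := fun a b : 'I_k => a < b)); last exact: sorted_enum_ord.
      by move=> a b ab; move: (Hab a b) => /andP [/implyP H1 _]; exact: H1.
    + by apply: sorted_filter => //; apply: sorted_enum_ord.
    + by move=> x; rewrite mem_filter mem_enum andbT.
  + rewrite /iso size_map size_enum_ord eqxx andTb.
    apply/allP => i; rewrite mem_iota add0n => /andP [_ Hi].
    apply/allP => j; rewrite mem_iota add0n => /andP [_ Hj].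
    pose a := Ordinal Hi; pose b := Ordinal Hj.
    rewrite !(nth_map a) -?enumT ?size_enum_ord //.
    have -> : nth a (enum 'I_k) i = a by apply: val_inj; rewrite /= nth_enum_ord.
    have -> : nth a (enum 'I_k) j = b by apply: val_inj; rewrite /= nth_enum_ord.
    by case/andP: (Hab a b).
- move=> [t /subseqP [m szm Et] Hi].
  have szt := iso_size Hi.
  have le : k <= n.
    by rewrite /k -szt; have := size_subseq (mask_subseq m (seqOf pi)); rewrite -Et /seqOf size_map size_enum_ord.
  set J := mask m (enum 'I_n).
  have Et' : t = map (fun i => val (pi i)) J by rewrite Et /seqOf map_mask.
  have szJ : size J = k by rewrite /k -szt Et' size_map.
  have sJ : sorted ltn (map val J).
    by rewrite /J map_mask val_enum_ord; apply: sorted_mask => //; [apply: ltn_trans | apply: iota_ltn_sorted].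
  exists [ffun a => nth (widen_ord le a) J a]; apply/forallP => a; apply/forallP => b.
  rewrite !ffunE; apply/andP; split.
  + apply/implyP => ab.
    rewrite -!(nth_map _ 0 val) ?szJ //.
    apply: (sorted_ltn_nth ltn_trans) => //; rewrite inE size_map szJ //.
  + move: Hi => /andP [_ /allP /(_ a)]; rewrite mem_iota add0n ltn_ord => /(_ isT).
    move=> /allP /(_ b); rewrite mem_iota add0n ltn_ord => /(_ isT).
    have Ea : nth 0 t a = val (pi (nth (widen_ord le a) J a)).
      by rewrite Et' (nth_map (widen_ord le a)) ?szJ.
    have Eb : nth 0 t b = val (pi (nth (widen_ord le b) J b)).
      by rewrite Et' (nth_map (widen_ord le b)) ?szJ.
    by rewrite Ea Eb.
Qed.

Lemma nth_seqOf n (pi : 'S_n) (i : 'I_n) : nth 0 (seqOf pi) i = val (pi i).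
Proof.
rewrite /seqOf (nth_map i) ?size_enum_ord //; congr (val (pi _)).
by apply: val_inj; rewrite /= nth_enum_ord.
Qed.

Lemma size_seqOf n (pi : 'S_n) : size (seqOf pi) = n.
Proof. by rewrite /seqOf size_map size_enum_ord. Qed.

Lemma seqOf_inj n : injective (@seqOf n).
Proof.
move=> p1 p2 E; apply/permP => i; apply: val_inj.
by rewrite -!nth_seqOf E.
Qed.

Lemma Pm_seqOf n (pi : 'S_n) : Pm n (seqOf pi).
Proof.
apply: uniq_perm; last first.
- move=> x; rewrite mem_iota add0n /=; apply/mapP/idP => [[i _ ->]|xn].
    exact: ltn_ord.
  exists (pi^-1 (Ordinal xn))%g; first by rewrite mem_enum.
  by rewrite permKV.
- exact: iota_uniq.
- rewrite map_inj_uniq ?enum_uniq //.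
  by move=> i j /val_inj /perm_inj.
Qed.

Lemma card_good n : #|[set pi : 'S_n | good (seqOf pi)]| = Gc n.
Proof.
rewrite cardE -(size_map (@seqOf n)); apply: count_Pm.
  by rewrite map_inj_uniq ?enum_uniq //; apply: seqOf_inj.
move=> s; apply/mapP/andP => [[pi]|[G P]].
  by rewrite mem_enum inE => G ->; split => //; apply: Pm_seqOf.
have U := Pm_uniq P; have A := Pm_all P; have sz := Pm_size P.
have Hlt (i : 'I_n) : nth 0 s i < n.
  by move/allP: A; apply; apply: mem_nth; rewrite sz.
pose f := fun i : 'I_n => Ordinal (Hlt i).
have finj : injective f.
  move=> i j [] /eqP; rewrite nth_uniq ?sz // => /eqP E; exact: val_inj.
exists (perm finj); first by rewrite mem_enum inE; apply: etrans G; congr good;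
  apply: (@eq_from_nth _ 0); rewrite ?size_seqOf ?sz // => i iLt;
  rewrite -[i]/(nat_of_ord (Ordinal iLt)) nth_seqOf permE.
apply: (@eq_from_nth _ 0); rewrite ?size_seqOf ?sz // => i iLt.
by rewrite -[i]/(nat_of_ord (Ordinal iLt)) nth_seqOf permE.
Qed.

Lemma num_avoiders_Gc n :
  num_avoiders [:: [:: 1; 2; 4; 3]; [:: 2; 1; 4; 3]; [:: 2; 3; 1]] n = Gc n.
Proof.
rewrite /num_avoiders -card_good; apply: eq_card => pi.
by rewrite !inE /avoids /= !contains_cont.
Qed.

Import Order.TTheory GRing.Theory Num.Theory.
Import numFieldNormedType.Exports.
Local Open Scope classical_set_scope.
Local Open Scope ring_scope.

Lemma Gc8 (R : realType) k : 8 * (Gc k.+2)%:R = (k.+2 + 2)%:R * 2 ^+ k.+2 :> R.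
Proof.
have H := Gc_closed k.
have -> : (8 : R) = 4%:R * 2%:R by rewrite -natrM.
rewrite -mulrA -natrM mul2n H natrM natrX.
have -> : (k.+2 + 2)%N = (k + 4)%N by lia.
rewrite !exprS; ring.
Qed.

Lemma part2 (R : realType) (n : nat) : (2 <= n)%N ->
     (num_avoiders [:: [:: 1; 2; 4; 3]; [:: 2; 1; 4; 3]; [:: 2; 3; 1]]%N n)%:R
       = (n + 2)%:R * (2 : R) ^ (n%:Z - 3).
Proof.
case: n => [|[|k]] // _; rewrite num_avoiders_Gc.
rewrite expfzDr // -exprnN.
have -> : (2:R) ^ (k.+2)%:Z = 2 ^+ k.+2 by [].
apply: (@mulfI _ 8); first by rewrite pnatr_eq0.
rewrite Gc8 exprS [2 ^+ 3]exprS [2 ^+ 2]exprS expr1; field.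
by [].
Qed.

Lemma bern (R : realFieldType) (h : R) (N : nat) : 0 <= h -> 1 + N%:R * h <= (1 + h) ^+ N.
Proof.
move=> h0; elim: N => [|N IH]; first by rewrite mul0r addr0 expr0.
rewrite exprS -natr1.
have H1 : 0 <= (1 + h) ^+ N by apply: exprn_ge0; lra.
have H2 : 0 <= N%:R * h * h by apply: mulr_ge0 => //; apply: mulr_ge0.
nra.
Qed.

Lemma cvg_nexp (R : realType) (y : R) : `|y| < 1 ->
  (fun N : nat => N%:R * y ^+ N) @ \oo --> 0.
Proof.
move=> y1; apply/norm_cvg0P.
have [r er] : {r | `|y| = r} by exists `|y|.
have r0 : 0 <= r by rewrite -er.
have r1 : r < 1 by rewrite -er.
pose s := (1 + r) / 2.
have s0 : 0 < s by rewrite /s divr_gt0 //; lra.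
have rs : r < s by rewrite /s ltr_pdivlMr //; lra.
have s1 : s < 1 by rewrite /s ltr_pdivrMr //; lra.
pose q := r / s.
have q0 : 0 <= q by rewrite /q divr_ge0 // ltW.
have q1 : `|q| < 1 by rewrite ger0_norm // /q ltr_pdivrMr // mul1r.
pose h := (1 - s) / s.
have h0 : 0 < h by rewrite /h divr_gt0 // subr_gt0.
have eh : 1 + h = s^-1 by rewrite /h; field; rewrite gt_eqF.
apply: (@squeeze_cvgr _ _ _ _ (fun=> 0) (fun N => h^-1 * q ^+ N)).
- near=> N; rewrite normr_ge0 /= normrM normrX er ger0_norm ?ler0n //.
  have rq : r = q * s by rewrite /q mulfVK // gt_eqF.
  rewrite rq exprMn.
  have B := bern N (ltW h0); rewrite eh exprVn in B.
  have sN : 0 < s ^+ N by apply: exprn_gt0.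
  have qN : 0 <= q ^+ N by apply: exprn_ge0.
  have : N%:R * h * s ^+ N <= 1.
    apply: le_trans (_ : (1 + N%:R * h) * s ^+ N <= 1).
      by rewrite mulrDl mul1r; lra.
    by rewrite -[X in _ <= X](mulVf (lt0r_neq0 sN)) ler_pM2r.
  move=> K.
  have K' : N%:R * s ^+ N <= h^-1.
    by rewrite -(ler_pM2l h0) mulfV ?gt_eqF // mulrA [h * _]mulrC.
  rewrite mulrCA [h^-1 * _]mulrC; apply: ler_wpM2l => //.
- exact: cvg_cst.
- rewrite -[0](mulr0 h^-1); apply: cvgM; first exact: cvg_cst.
  exact: cvg_expr.
Unshelve. all: by end_near.
Qed.

Lemma part1 (R : realType) (x : R) : `|x| < 2^-1 ->
     series (fun k => (num_avoiders [:: [:: 1; 2; 4; 3]; [:: 2; 1; 4; 3]; [:: 2; 3; 1]]%N k)%:R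
                      * x ^+ k) @ \oo -->
       1 + x * ((x - 1) ^+ 2 / (2 * x - 1) ^+ 2).
Proof.
move=> hx.
have -> : (fun k => (num_avoiders [:: [:: 1; 2; 4; 3]; [:: 2; 1; 4; 3]; [:: 2; 3; 1]]%N k)%:R
                      * x ^+ k) = (fun k => (Gc k)%:R * x ^+ k).
  by apply: funext => k; rewrite num_avoiders_Gc.
set u := fun k => _.
pose y := 2 * x.
have hy : `|y| < 1.
  rewrite /y normrM ger0_norm //.
  by rewrite -(ltr_pM2l (_ : 0 < 2^-1)) // mulrA mulVf // mul1r mulr1.
have y1 : y - 1 != 0.
  apply/eqP => E; have : y = 1 by apply/eqP; rewrite -subr_eq0 E.
  by move=> E1; move: hy; rewrite E1 normr1 ltxx.
pose D := (y - 1) ^+ 2.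
have D0 : D != 0 by rewrite /D expf_neq0.
pose P := 1 - 3 * x + 2 * x ^+ 2 + x ^+ 3.
have closed k : 8 * D * series u k.+2 =
     8 * P + y ^+ k.+2 * ((k.+3)%:R * y - (k.+4)%:R) :> R.
  elim: k => [|k IH].
    rewrite seriesSr seriesSr /series /= big_geq // add0r /u Gc0 Gc1.
    rewrite /D /P /y; ring.
  rewrite seriesSr.
  have HG := Gc8 R k; have e : (k.+2 + 2 = k.+4)%N by lia.
  rewrite e in HG.
  have -> : 8 * D * (series u k.+2 + u k.+2) =
            8 * D * series u k.+2 + D * (8 * (Gc k.+2)%:R) * x ^+ k.+2.
    by rewrite /u; ring.
  rewrite IH HG [y ^+ k.+3]exprS /D /y /P !exprMn; ring.
have x2 : 2 * x - 1 != 0 by [].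
have D8 : 8 * D != 0 by rewrite mulf_neq0 // pnatr_eq0.
pose g := fun N : nat => (8 * P + N%:R * y ^+ N * (y - 1) + y ^+ N * (y - 2)) / (8 * D).
have Lg : g @ \oo --> (8 * P + 0 * (y - 1) + 0 * (y - 2)) / (8 * D).
  apply: cvgMr_tmp; apply: cvgD; first apply: cvgD.
  - exact: cvg_cst.
  - by apply: cvgMr_tmp; apply: cvg_nexp.
  - by apply: cvgMr_tmp; apply: cvg_expr.
have -> : 1 + x * ((x - 1) ^+ 2 / (2 * x - 1) ^+ 2) =
          (8 * P + 0 * (y - 1) + 0 * (y - 2)) / (8 * D).
  rewrite !mul0r !addr0 /P /D /y; field.
  exact: x2.
apply: cvg_trans Lg; apply: near_eq_cvg; exists 2%N => // N /= N2.
case: N N2 => [|[|k]] // _.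
apply: (@mulfI _ (8 * D)) => //; rewrite closed /g.
rewrite mulrC divfK //; rewrite /y; ring.
Qed.

Theorem mainTheorem11 (R : realType) :
  (forall x : R, `|x| < 2^-1 ->
     series (fun k => (num_avoiders [:: [:: 1; 2; 4; 3]; [:: 2; 1; 4; 3]; [:: 2; 3; 1]]%N k)%:R
                      * x ^+ k) @ \oo -->
       1 + x * ((x - 1) ^+ 2 / (2 * x - 1) ^+ 2))
  /\
  (forall n : nat, (2 <= n)%N ->
     (num_avoiders [:: [:: 1; 2; 4; 3]; [:: 2; 1; 4; 3]; [:: 2; 3; 1]]%N n)%:R
       = (n + 2)%:R * (2 : R) ^ (n%:Z - 3)).
Proof.
split; [exact: part1 | exact: part2].
Qed.
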